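(* For $k\ge 1$ let $G_k=(V_k,E_k)$ be the graph with vertex set $V_k=\{v_0,\ldots,v_{4k}\}$ (so $|V_k|=4k+1$), specified vertex $a=v_0$, and edge set $E_k=\{(v_0,v_1),(v_0,v_2)\}\cup\bigcup_{i=0}^{k-1}\{(v_{4i+1},v_{4i+2}),(v_{4i+2},v_{4i+3}),(v_{4i+3},v_{4i+4}),(v_{4i+4},v_{4i+1})\}\cup\bigcup_{i=0}^{k-2}\{(v_{4i+4},v_{4i+5}),(v_{4i+3},v_{4i+6})\}$. Let $T_k^A$ be the spanning tree of $G_k$ with edge set $\{e_0,\ldots,e_{4k-1}\}$ where $e_i=(v_i,v_{i+1})$, and let $T_k^B$ be the spanning tree with edge set $\{(v_0,v_1),(v_0,v_2)\}\cup\bigcup_{i=0}^{k-1}\{(v_{4i+1},v_{4i+4}),(v_{4i+2},v_{4i+3})\}\cup\bigcup_{i=0}^{k-2}\{(v_{4i+4},v_{4i+5}),(v_{4i+3},v_{4i+6})\}$. Let $T_1,\ldots,T_\ell$ be a shortest sequence of spanning trees of $G_k$ with $T_1=T_k^A$ and $T_\ell=T_k^B$ such that every pair of consecutive trees are adjacent (with respect to $a=v_0$). Then $\ell=\Omega(|V_k|^2)$, i.e., there is an absolute constant $c>0$ such that $\ell\ge c\,(4k+1)^2$ for all $k\ge1$.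
   Context: Given a connected graph $G=(V,E)$ with $n\ge 2$ vertices and a specified vertex $a\in V$, two spanning trees of $G$ are called adjacent if their intersection (the subgraph consisting of the edges common to both) contains a tree on $n-1$ vertices that includes $a$. *)

(* Defs.v *)
From mathcomp Require Import all_boot all_order all_algebra.
Set Implicit Arguments. Unset Strict Implicit. Unset Printing Implicit Defensive.

(* Generic notions for a finite simple graph on a finType V.  An (undirected)
   edge is a 2-element set of vertices; a graph / subgraph is given by its
   edge set  E : {set {set V}}. *)
Section Graphs.
Variable V : finType.

Definition is_edge (e : {set V}) : bool := #|e| == 2.

Definition edge_rel (F : {set {set V}}) : rel V :=
  fun x y => (x != y) && ([set x; y] \in F).

Definition is_tree_on (W : {set V}) (F : {set {set V}}) : bool :=
  [&& W != set0,
      [forall e in F, is_edge e && (e \subset W)],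
      [forall x in W, forall y in W, connect (edge_rel F) x y] &
      #|F| == #|W| - 1].

Definition spanning_tree (E T : {set {set V}}) : bool :=
  (T \subset E) && is_tree_on [set: V] T.

Definition adjacent_trees (a : V) (T T' : {set {set V}}) : Prop :=
  exists (W : {set V}) (F : {set {set V}}),
    [/\ #|W| = #|V| - 1, a \in W, F \subset T :&: T' & is_tree_on W F].
End Graphs.

Definition vtx (k : nat) := 'I_(4 * k).+1.

Definition upair (x y : nat) (p : nat * nat) : bool :=
  ((x == p.1) && (y == p.2)) || ((x == p.2) && (y == p.1)).

Definition root_pairs : seq (nat * nat) := [:: (0, 1); (0, 2)].
Definition cycle_pairs (k : nat) : seq (nat * nat) :=
  flatten [seq [:: (4*i+1, 4*i+2); (4*i+2, 4*i+3); (4*i+3, 4*i+4); (4*i+4, 4*i+1)]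
          | i <- iota 0 k].
Definition link_pairs (k : nat) : seq (nat * nat) :=
  flatten [seq [:: (4*i+4, 4*i+5); (4*i+3, 4*i+6)] | i <- iota 0 (k - 1)].
Definition TA_pairs (k : nat) : seq (nat * nat) :=
  [seq (i, i.+1) | i <- iota 0 (4 * k)].
Definition TB_pairs (k : nat) : seq (nat * nat) :=
  root_pairs ++
  flatten [seq [:: (4*i+1, 4*i+4); (4*i+2, 4*i+3)] | i <- iota 0 k] ++
  link_pairs k.

Definition edges_of (k : nat) (ps : seq (nat * nat)) : {set {set vtx k}} :=
  [set e : {set vtx k} | [exists x : vtx k, exists y : vtx k, (e == [set x; y]) && has (upair (val x) (val y)) ps]].

Definition E_G (k : nat) : {set {set vtx k}} :=
  edges_of k (root_pairs ++ cycle_pairs k ++ link_pairs k).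
Definition T_A (k : nat) : {set {set vtx k}} := edges_of k (TA_pairs k).
Definition T_B (k : nat) : {set {set vtx k}} := edges_of k (TB_pairs k).
Definition a0 (k : nat) : vtx k := ord0.

(* Main.v *)
Require Import Defs.
From mathcomp Require Import all_boot all_order all_algebra zify lra.
Import GRing.Theory Num.Theory.
Set Implicit Arguments. Unset Strict Implicit. Unset Printing Implicit Defensive.

Definition lev (v : nat) : nat := v.+1 %/ 2.
Definition sd (v : nat) : bool := (v %% 4 == 2) || (v %% 4 == 3).
Definition vid (l : nat) (b : bool) : nat :=
  if l == 0 then 0 else
  if b then (if l %% 2 == 1 then 2 * l else 2 * l - 1)
  else (if l %% 2 == 1 then 2 * l - 1 else 2 * l).

Lemma lev_vid l b : lev (vid l b) = l.
Proof.
rewrite /lev /vid; case: eqP => [->//|/eqP l0].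
case: b; case: eqP => h; lia.
Qed.

Lemma sd_vid l b : 0 < l -> sd (vid l b) = b.
Proof.
move=> l0; rewrite /vid; case: eqP => [e|_]; first lia.
rewrite /sd.
case: b; case: (l %% 2 =P 1) => h.
- apply/orP; left; apply/eqP; lia.
- apply/orP; right; apply/eqP; lia.
- apply/negbTE/negP => /orP [] /eqP; lia.
- apply/negbTE/negP => /orP [] /eqP; lia.
Qed.

Lemma vid_inv v : vid (lev v) (sd v) = v.
Proof.
rewrite /vid /lev /sd; case: eqP => [e|/eqP e]; first lia.
have : v %% 4 < 4 by rewrite ltn_mod.
case: (v %% 4 =P 2) => h2; case: (v %% 4 =P 3) => h3 /=;
  case: eqP => h; lia.
Qed.

Lemma vid_le l b : vid l b <= 2 * l.
Proof. rewrite /vid; case: (l =P 0) => _ //; case: b; case: (l %% 2 =P 1) => _; lia. Qed.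

Lemma vid0 l b : (vid l b == 0) = (l == 0).
Proof. case: l => [|l] //; rewrite /vid /=; case: b; case: (l.+1 %% 2 =P 1) => _; apply/negbTE/eqP; lia. Qed.

Definition adj1 (x y : nat) : bool :=
  ((lev x == lev y) && (0 < lev x)) ||
  ((lev y == (lev x).+1) && ((x == 0) || (sd x == sd y))).
Definition adjG (x y : nat) : bool := adj1 x y || adj1 y x.

Lemma adjG_sym x y : adjG x y = adjG y x.
Proof. by rewrite /adjG orbC. Qed.

Definition single (x : bool * bool) : bool := x.1 != x.2.
Definition tv (p : option bool) (x : bool * bool) : bool := single x && (p != Some x.2).
Definition nextp (p : option bool) (x : bool * bool) : option bool :=
  if single x then Some x.2 else p.

Fixpoint psi (p : option bool) (l : seq (bool * bool)) : nat :=
  match l with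
  | [::] => 0
  | x :: l' => size l' * tv p x + psi (nextp p x) l'
  end.

Fixpoint psiA (p : option bool) (l : seq (bool * bool)) (m : nat) : nat :=
  match l with
  | [::] => 0
  | x :: l' => (size l' + m) * tv p x + psiA (nextp p x) l' m
  end.

Definition foldp (p : option bool) (l : seq (bool * bool)) := foldl nextp p l.

Lemma psi_cat p pre r : psi p (pre ++ r) = psiA p pre (size r) + psi (foldp p pre) r.
Proof.
elim: pre p => [|x pre IH] p //=.
by rewrite IH size_cat addnA.
Qed.

Definition mk (b o u : bool) : bool * bool := if b then (o, u) else (u, o).

Lemma local p b o1 o2 u d u' d' :
  ~~ (u && d) -> ~~ (u' && d') -> o1 || u -> o2 || d -> o1 || u' -> o2 || d' ->
  nextp (nextp p (mk b o1 u)) (mk b o2 d) = nextp (nextp p (mk b o1 u')) (mk b o2 d') /\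
  tv p (mk b o1 u) + tv (nextp p (mk b o1 u)) (mk b o2 d) =
  tv p (mk b o1 u') + tv (nextp p (mk b o1 u')) (mk b o2 d').
Proof.
by case: p => [[]|]; case: b; case: o1; case: o2; case: u; case: d; case: u'; case: d'.
Qed.

Lemma psi_two p x1 x2 y1 y2 post :
  nextp (nextp p x1) x2 = nextp (nextp p y1) y2 ->
  tv p x1 + tv (nextp p x1) x2 = tv p y1 + tv (nextp p y1) y2 ->
  psi p (x1 :: x2 :: post) <= psi p (y1 :: y2 :: post) + 1.
Proof.
move=> e1 e2 /=; rewrite e1.
move: e2; set a := tv p x1; set b := tv _ x2; set a' := tv p y1; set b' := tv _ y2.
have : a <= 1 by case: (a).
move=> ha e2; nia.
Qed.

Lemma psi_one p x y : psi p [:: x] = psi p [:: y].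
Proof. by rewrite /= !mul0n. Qed.

Lemma psi_TB p m : psi p (nseq m (true, true)) = 0.
Proof. by elim: m p => [|m IH] p //=; rewrite IH /nextp /tv /single /= muln0. Qed.

Definition alt (j : nat) : bool * bool := (~~ odd j, odd j).

Lemma psi_alt m : forall i p, p != Some (odd i) ->
  (psi p [seq alt j | j <- iota i m]).*2 = m * m.-1.
Proof.
elim: m => [|m IH] i p hp //=.
rewrite size_map size_iota.
have -> : tv p (alt i) = true by rewrite /tv /single /alt /= hp; case: (odd i).
have -> : nextp p (alt i) = Some (odd i) by rewrite /nextp /single /alt /=; case: (odd i).
rewrite doubleD IH; last by rewrite oddS; case: (odd i).
case: m {IH} => [|m] //=; lia.
Qed.

Lemma upairC x y p : upair x y p = upair y x p.
Proof. by rewrite /upair orbC; congr (_ || _); apply: andbC. Qed.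

Lemma mem_edges_of k ps (x y : vtx k) :
  ([set x; y] \in edges_of k ps) = has (upair x y) ps.
Proof.
rewrite inE; apply/existsP/idP.
- case=> x' /existsP [y' /andP [/eqP e h]].
  have hx : x' \in [set x; y] by rewrite e set21.
  have hy : y' \in [set x; y] by rewrite e set22.
  have gx : x \in [set x'; y'] by rewrite -e set21.
  have gy : y \in [set x'; y'] by rewrite -e set22.
  rewrite !inE in hx hy gx gy.
  case/orP: hx => /eqP ex; case/orP: hy => /eqP ey; subst x' y' => //.
  + by move: gy; rewrite orbb => /eqP ->.
  + by rewrite (eq_has (fun p => upairC _ _ p)).
  + by move: gx; rewrite orbb => /eqP ->.
- move=> h; exists x; apply/existsP; exists y; by rewrite eqxx h.
Qed.

Lemma adj_rung x y : lev x = lev y -> 0 < lev x -> adjG x y.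
Proof. by move=> e h; rewrite /adjG /adj1 e eqxx -e h. Qed.

Lemma adj_rail x y : lev y = (lev x).+1 -> sd x = sd y -> adjG x y.
Proof. by move=> e h; rewrite /adjG /adj1 e eqxx h eqxx !orbT. Qed.

Lemma sd_shift i c : sd (4 * i + c) = sd c.
Proof. by rewrite /sd; have -> : (4 * i + c) %% 4 = c %% 4 by lia. Qed.

Lemma Eadj k (x y : nat) :
  has (upair x y) (root_pairs ++ cycle_pairs k ++ link_pairs k) -> adjG x y.
Proof.
case/hasP => [[a b] hin] hu.
suff hab : adjG a b.
  by case/orP: hu => /andP [/eqP -> /eqP ->] //; rewrite adjG_sym.
rewrite !mem_cat in hin; case/or3P: hin => h.
- by rewrite !inE in h; case/orP: h => /eqP [-> ->].
- case/flattenP: h => s /mapP [i _ ->]; rewrite !inE => /or4P [] /eqP [-> ->].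
  + by apply: adj_rung; rewrite /lev; lia.
  + by apply: adj_rail; [rewrite /lev; lia | rewrite !sd_shift].
  + by apply: adj_rung; rewrite /lev; lia.
  + by rewrite adjG_sym; apply: adj_rail; [rewrite /lev; lia | rewrite !sd_shift].
- case/flattenP: h => s /mapP [i _ ->]; rewrite !inE => /orP [] /eqP [-> ->].
  + by apply: adj_rail; [rewrite /lev; lia | rewrite !sd_shift].
  + apply: adj_rail; first by rewrite /lev; lia.
    by rewrite (_ : 4 * i + 6 = 4 * i.+1 + 2) ?sd_shift //; lia.
Qed.

Lemma hasTA k a b :
  has (upair a b) (TA_pairs k) = ((a.+1 == b) && (b <= 4 * k)) || ((b.+1 == a) && (a <= 4 * k)).
Proof.
rewrite has_map; apply/hasP/orP.
- case=> i; rewrite mem_iota => /andP [_ hi] /= /orP [] /andP [/eqP -> /eqP ->].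
  + by left; rewrite eqxx /=; lia.
  + by right; rewrite eqxx /=; lia.
- case=> /andP [/eqP <- h].
  + exists a; first by rewrite mem_iota /=; lia.
    by rewrite /= /upair /= !eqxx.
  + exists b; first by rewrite mem_iota /=; lia.
    by rewrite /= /upair /= !eqxx orbT.
Qed.

Ltac nfalse := apply/negbTE/negP => /orP [/andP [/eqP ? ?]|/andP [/eqP ? ?]]; lia.
Ltac ntrue := first [apply/orP; left; apply/andP; split; [apply/eqP|]; lia
                    | apply/orP; right; apply/andP; split; [apply/eqP|]; lia].

Definition vx k (l : nat) (b : bool) : vtx k := inord (vid l b).
Definition gedge k (j : nat) (b : bool) : {set vtx k} := [set vx k j b; vx k j.+1 b].

Lemma vxK k l b : l <= 2 * k -> nat_of_ord (vx k l b) = vid l b.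
Proof. move=> h; rewrite /vx inordK //; have := vid_le l b; lia. Qed.

Lemma gedge_TA k j b : j < 2 * k -> (gedge k j b \in T_A k) = (b == odd j).
Proof.
move=> hj; rewrite /T_A /gedge mem_edges_of hasTA !vxK; try lia.
have ho : odd j = (j %% 2 == 1) by rewrite modn2; case: (odd j).
rewrite ho /vid.
case: (j =P 0) => [->|h0] /=.
  by rewrite mod0n; case: b => //=; rewrite orbF; lia.
case: b; case: (j %% 2 =P 1) => h1; case: (j.+1 %% 2 =P 1) => h2; rewrite /=;
 first [ lia
       | ntrue
       | nfalse
       | (have : (j %% 2 == 1) = false by apply/negbTE/eqP); move=> ->;
         nfalse
       | idtac ].
Qed.

Lemma TB_mem k j b : j < 2 * k -> (vid j b, vid j.+1 b) \in TB_pairs k.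
Proof.
move=> hj; rewrite /TB_pairs !mem_cat.
case: (j =P 0) => [->|h0].
  by rewrite /vid /=; case: b.
case: (j %% 2 =P 1) => h1.
- apply/orP; right; apply/orP; left.
  apply/flattenP; exists [:: (4 * (j %/ 2) + 1, 4 * (j %/ 2) + 4); (4 * (j %/ 2) + 2, 4 * (j %/ 2) + 3)].
    apply/mapP; exists (j %/ 2); last by [].
    rewrite mem_iota /=; lia.
  rewrite /vid; case: (j =P 0) => // _; rewrite /=.
  have -> : (j.+1 %% 2 == 1) = false by apply/negbTE/eqP; lia.
  rewrite (_ : j %% 2 == 1) ?inE; last by apply/eqP.
  case: b.
  + apply/orP; right; apply/eqP; congr pair; lia.
  + apply/orP; left; apply/eqP; congr pair; lia.
- apply/orP; right; apply/orP; right.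
  apply/flattenP; exists [:: (4 * (j %/ 2 - 1) + 4, 4 * (j %/ 2 - 1) + 5); (4 * (j %/ 2 - 1) + 3, 4 * (j %/ 2 - 1) + 6)].
    apply/mapP; exists (j %/ 2 - 1); last by [].
    rewrite mem_iota /=; lia.
  rewrite /vid; case: (j =P 0) => // _; rewrite /=.
  have -> : (j.+1 %% 2 == 1) by apply/eqP; lia.
  have -> : (j %% 2 == 1) = false by apply/negbTE/eqP.
  rewrite !inE.
  case: b.
  + apply/orP; right; apply/eqP; congr pair; lia.
  + apply/orP; left; apply/eqP; congr pair; lia.
Qed.

Lemma gedge_TB k j b : j < 2 * k -> gedge k j b \in T_B k.
Proof.
move=> hj; rewrite /T_B /gedge mem_edges_of !vxK; try lia.
apply/hasP; exists (vid j b, vid j.+1 b); first exact: TB_mem.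
by rewrite /upair /= !eqxx.
Qed.

Definition gst k (T : {set {set vtx k}}) j : bool * bool :=
  (gedge k j false \in T, gedge k j true \in T).
Definition gstates k (T : {set {set vtx k}}) := [seq gst T j | j <- iota 0 (2 * k)].
Definition Psi k (T : {set {set vtx k}}) := psi None (gstates T).

Lemma Psi_TA k : (Psi (T_A k)).*2 = (2 * k) * (2 * k).-1.
Proof.
rewrite /Psi /gstates.
have -> : [seq gst (T_A k) j | j <- iota 0 (2 * k)] = [seq alt j | j <- iota 0 (2 * k)].
  apply/eq_in_map => j; rewrite mem_iota /= => hj.
  by rewrite /gst /alt !gedge_TA //; case: (odd j).
by rewrite psi_alt.
Qed.

Lemma psi_all p l : all (pred1 (true, true)) l -> psi p l = 0.
Proof.
elim: l p => [|x l IH] p //= /andP [/eqP -> h].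
by rewrite IH // /tv /single /= muln0.
Qed.

Lemma Psi_TB k : Psi (T_B k) = 0.
Proof.
rewrite /Psi /gstates psi_all //; apply/allP => z /mapP [j]; rewrite mem_iota /= => hj ->.
by rewrite /gst !gedge_TB.
Qed.

Lemma cross (V : finType) (e : rel V) (P : pred V) x p :
  path e x p -> P x -> ~~ P (last x p) -> exists u v, [/\ e u v, P u & ~~ P v].
Proof.
elim: p x => [|y p IH] x /=; first by move=> _ ->.
case/andP=> exy hp px; case py: (P y).
  by move=> h; exact: IH hp py h.
by move=> _; exists x, y; rewrite py.
Qed.

Lemma lev_vx k l b : l <= 2 * k -> lev (vx k l b) = l.
Proof. by move=> h; rewrite vxK // lev_vid. Qed.

Lemma gap_nonempty k (T : {set {set vtx k}}) j :
  spanning_tree (E_G k) T -> j < 2 * k ->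
  (gedge k j false \in T) || (gedge k j true \in T).
Proof.
case/andP=> hTE /and4P [_ _ hcon _] hj.
have hc : connect (edge_rel T) (a0 k) (vx k j.+1 false).
  by move/forall_inP: hcon => /(_ _ (in_setT _)) /forall_inP /(_ _ (in_setT _)).
case/connectP: hc => p hp hl.
have hlast : ~~ (lev (last (a0 k) p) <= j) by rewrite -hl lev_vx; lia.
have [u [v [euv pu pv]]] := @cross _ _ (fun z : vtx k => lev z <= j) _ _ hp (isT : lev 0 <= j) hlast.
move: pu pv; rewrite /= -ltnNge => pu pv.
case/andP: euv => _ huv.
have hE : adjG u v.
  apply: (@Eadj k); rewrite -mem_edges_of; exact: (subsetP hTE).
have [hlv hlu hs] : [/\ lev v = j.+1, lev u = j & ((nat_of_ord u == 0) || (sd u == sd v))].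
  move: hE; rewrite /adjG /adj1.
  case/orP => /orP [/andP [/eqP e _]| /andP [/eqP e h]]; try lia.
  split; [lia|lia|]. exact: h.
have eu : u = vx k j (sd v).
  apply: val_inj; rewrite /= vxK; last lia.
  case/orP: hs => [/eqP u0| /eqP es].
    by move: hlu; rewrite u0 /lev /= => <-.
  by rewrite -es -hlu vid_inv.
have ev : v = vx k j.+1 (sd v).
  by apply: val_inj; rewrite /= vxK -?hlv ?vid_inv //; lia.
have hT : gedge k j (sd v) \in T by rewrite /gedge -eu -ev.
by move: hT; case: (sd v) => ->; rewrite ?orbT.
Qed.

Lemma hV k : #|vtx k| = (4 * k).+1.
Proof. exact: card_ord. Qed.
Lemma card_diff1 k (T F : {set {set vtx k}}) : 0 < k -> F \subset T -> #|F| = #|vtx k| - 2 -> #|T| = #|[set: vtx k]| - 1 -> #|T :\: F| == 1.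
Proof.
move=> k0 hFT hcF hcT.
rewrite cardsD (setIidPr hFT) hcT hcF cardsT hV.
apply/eqP; lia.
Qed.

Lemma leaf_facts k (T F : {set {set vtx k}}) (x : vtx k) :
  0 < k -> spanning_tree (E_G k) T -> F \subset T -> #|F| = #|vtx k| - 2 -> x != a0 k ->
  (forall g, g \in F -> x \notin g) ->
  (forall g1 g2, g1 \in T -> g2 \in T -> x \in g1 -> x \in g2 -> g1 = g2) /\
  (forall g, g \in T -> x \notin g -> g \in F).
Proof.
move=> k0 /andP [_ hT].
case/and4P: hT => _ _ hcon /eqP hcT.
move=> hFT hcF hxa hFx.
have hc : connect (edge_rel T) x (a0 k).
  by move/forall_inP: hcon => /(_ _ (in_setT _)) /forall_inP /(_ _ (in_setT _)).
case/connectP: hc => [[|y p]] hp hl.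
  by move: hxa; rewrite hl /= eqxx.
case/andP: hp => /andP [_ hxy] _.
have he0 : [set x; y] \in T :\: F.
  by rewrite inE hxy andbT; apply/negP => /hFx; rewrite set21.
have hc1 : #|T :\: F| == 1.
  exact: (card_diff1 k0 hFT hcF hcT).
case/cards1P: hc1 => e1 he1.
have hD : forall g, g \in T -> g \notin F -> g = [set x; y].
  move=> g gT gF.
  have : g \in T :\: F by rewrite inE gT gF.
  rewrite he1 inE => /eqP ->.
  by move: he0; rewrite he1 inE => /eqP ->.
split.
- move=> g1 g2 h1 h2 x1 x2.
  have n1 : g1 \notin F by apply/negP => /hFx; rewrite x1.
  have n2 : g2 \notin F by apply/negP => /hFx; rewrite x2.
  by rewrite (hD g1 h1 n1) (hD g2 h2 n2).
- move=> g gT xg; apply/negPn/negP => gF.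
  by move: xg; rewrite (hD g gT gF) set21.
Qed.

Lemma not_all_W k (W : {set vtx k}) : #|W| = #|vtx k| - 1 -> exists x, x \notin W.
Proof.
move=> hW; case: (pickP (fun z => z \notin W)) => [z hz|h]; first by exists z.
have : [set: vtx k] \subset W by apply/subsetP => z _; move: (h z) => /negbFE.
move/subset_leq_card; rewrite cardsT hW hV; lia.
Qed.

Lemma gst_mk k (T : {set {set vtx k}}) j b :
  gst T j = mk b (gedge k j (~~ b) \in T) (gedge k j b \in T).
Proof. by rewrite /gst /mk; case: b. Qed.

Lemma ne_mk k (T : {set {set vtx k}}) j b :
  spanning_tree (E_G k) T -> j < 2 * k ->
  (gedge k j (~~ b) \in T) || (gedge k j b \in T).
Proof. by move=> hT hj; have := gap_nonempty hT hj; case: b => //=; rewrite orbC. Qed.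

Lemma split_iota k m : 0 < m -> m <= 2 * k ->
  iota 0 (2 * k) = iota 0 m.-1 ++ m.-1 :: iota m (2 * k - m).
Proof.
move=> h1 h2; rewrite {1}(_ : 2 * k = m.-1 + (2 * k - m).+1); last lia.
by rewrite iotaD add0n /= (prednK h1).
Qed.

Lemma psiA_eq p l1 l2 m : l1 = l2 -> psiA p l1 m = psiA p l2 m.
Proof. by move=> ->. Qed.

Lemma Psi_step k (T T' : {set {set vtx k}}) :
  0 < k -> spanning_tree (E_G k) T -> spanning_tree (E_G k) T' ->
  adjacent_trees (a0 k) T T' -> Psi T <= Psi T' + 1.
Proof.
move=> k0 hT hT' [W [F [hW ha hF htr]]].
case/and4P: htr => _ hFW _ /eqP hcF.
have [x hx] := not_all_W hW.
have hxa : x != a0 k by apply: contraNneq hx => ->.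
have hFx : forall g, g \in F -> x \notin g.
  move=> g gF; move/forall_inP: hFW => /(_ g gF) /andP [_ /subsetP hs].
  by apply/negP => /hs; rewrite (negbTE hx).
have hcF' : #|F| = #|vtx k| - 2 by rewrite hcF hW -subnDA.
move: hF; rewrite subsetI => /andP [hFT hFT'].
have [L1 L2] := leaf_facts k0 hT hFT hcF' hxa hFx.
have [L1' L2'] := leaf_facts k0 hT' hFT' hcF' hxa hFx.
have hTT : forall g : {set vtx k}, x \notin g -> (g \in T) = (g \in T').
  move=> g xg; apply/idP/idP => h.
    by apply: (subsetP hFT'); exact: L2.
  by apply: (subsetP hFT); exact: L2'.
have hx0 : nat_of_ord x != 0.
  by apply: contraNneq hxa => e; apply/eqP/val_inj.
have hl1 : 0 < lev x by move: hx0; clear -x; rewrite /lev; lia.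
have hl2 : lev x <= 2 * k by move: (ltn_ord x); clear -x; rewrite /lev; lia.
have hxe : x = vx k (lev x) (sd x) by apply: val_inj; rewrite /= vxK // vid_inv.
have G1 : forall j b', j < 2 * k -> x \in gedge k j b' ->
    ((j == (lev x).-1) || (j == lev x)) && (b' == sd x).
  move=> j b' hj; rewrite /gedge !inE => /orP [] /eqP e.
  - have ev : nat_of_ord x = vid j b' by rewrite e vxK // ltnW.
    have j0 : 0 < j by move: hx0; rewrite ev vid0 lt0n.
    by rewrite ev lev_vid sd_vid // !eqxx orbT.
  - have ev : nat_of_ord x = vid j.+1 b' by rewrite e vxK.
    by rewrite ev lev_vid sd_vid // !eqxx /= ?orbT.
have hgj : forall j, j < 2 * k -> j != (lev x).-1 -> j != lev x -> gst T j = gst T' j.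
  move=> j hj n1 n2; rewrite /gst !hTT //; apply/negP => /(G1 _ _ hj);
    by rewrite (negbTE n1) (negbTE n2).
have hoth : forall j, j < 2 * k -> (gedge k j (~~ sd x) \in T) = (gedge k j (~~ sd x) \in T').
  move=> j hj; apply: hTT; apply/negP => /(G1 _ _ hj) /andP [_].
  by case: (sd x).
have xu : x \in gedge k (lev x).-1 (sd x).
  by rewrite /gedge (prednK hl1) !inE -hxe eqxx orbT.
have xd : lev x < 2 * k -> x \in gedge k (lev x) (sd x).
  by move=> _; rewrite /gedge !inE -hxe eqxx.
have dist : lev x < 2 * k -> gedge k (lev x).-1 (sd x) != gedge k (lev x) (sd x).
  move=> hlt; apply/negP => /eqP e.
  have : vx k (lev x).-1 (sd x) \in gedge k (lev x) (sd x) by rewrite -e /gedge set21.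
  rewrite /gedge !inE => /orP [] /eqP /(congr1 (fun z : vtx k => lev z)); rewrite !lev_vx; clear -hl1 hlt hl2; lia.
rewrite /Psi /gstates (split_iota hl1 hl2) !map_cat !psi_cat.
rewrite (psiA_eq _ _ (l2 := [seq gst T' j | j <- iota 0 (lev x).-1])); last first.
  apply/eq_in_map => j; rewrite mem_iota /= => hj; apply: hgj; clear -hj hl1 hl2; lia.
have -> : [seq gst T j | j <- iota 0 (lev x).-1] = [seq gst T' j | j <- iota 0 (lev x).-1].
  apply/eq_in_map => j; rewrite mem_iota /= => hj; apply: hgj; clear -hj hl1 hl2; lia.
rewrite !size_map /= !size_map -addnA leq_add2l.
set q := foldp None _.
case: (ltnP (lev x) (2 * k)) => hlt; last first.
  have -> : 2 * k - lev x = 0 by clear -hlt hl2; lia.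
  by rewrite /= !mul0n.
rewrite (_ : 2 * k - lev x = (2 * k - (lev x).+1).+1); last by clear -hlt; lia.
rewrite /=.
have -> : [seq gst T j | j <- iota (lev x).+1 (2 * k - (lev x).+1)] =
          [seq gst T' j | j <- iota (lev x).+1 (2 * k - (lev x).+1)].
  apply/eq_in_map => j; rewrite mem_iota => /andP [h1 h2]; apply: hgj; clear -h1 h2 hl1 hl2 hlt; lia.
set post := [seq gst T' j | j <- _].
rewrite !(gst_mk _ _ (sd x)) -!hoth; try (clear -hl1 hl2 hlt; lia).
have hpl : (lev x).-1 < 2 * k by clear -hl1 hlt; lia.
have nd : ~~ ((gedge k (lev x).-1 (sd x) \in T) && (gedge k (lev x) (sd x) \in T)).
  apply/negP => /andP [h1 h2]; move: (dist hlt).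
  by rewrite (L1 _ _ h1 h2 xu (xd hlt)) eqxx.
have nd' : ~~ ((gedge k (lev x).-1 (sd x) \in T') && (gedge k (lev x) (sd x) \in T')).
  apply/negP => /andP [h1 h2]; move: (dist hlt).
  by rewrite (L1' _ _ h1 h2 xu (xd hlt)) eqxx.
have n1 := ne_mk (sd x) hT hpl.
have n2 := ne_mk (sd x) hT hlt.
have n3 := ne_mk (sd x) hT' hpl.
have n4 := ne_mk (sd x) hT' hlt.
rewrite -hoth // in n3; rewrite -hoth // in n4.
have [e1 e2] := local q (sd x) nd nd' n1 n2 n3 n4.
have := psi_two post e1 e2.
by rewrite /= /post size_map.
Qed.

Lemma chain k (T : {set {set vtx k}}) s : 0 < k ->
  all (spanning_tree (E_G k)) (T :: s) ->
  (forall i, i < size s -> adjacent_trees (a0 k) (nth T (T :: s) i) (nth T s i)) ->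
  Psi T <= Psi (last T s) + size s.
Proof.
move=> k0; elim: s T => [|y s IH] T /=; first by rewrite addn0.
case/and3P=> hT hy hs hadj.
have h0 := hadj 0 (ltn0Sn _); rewrite /= in h0.
have h1 := Psi_step k0 hT hy h0.
have : Psi y <= Psi (last y s) + size s.
  apply: IH; first by rewrite /= hy hs.
  move=> i hi; have := hadj i.+1 hi; rewrite /=.
  rewrite (set_nth_default y T) //; last by rewrite /= ltnS ltnW.
  by rewrite (set_nth_default y T hi).
move=> h2; rewrite addnS -addSn; apply: leq_trans h1 _; by rewrite addn1 ltnS.
Qed.

Theorem theorem2 :
  exists c : rat, (0 < c)%R /\
  forall (k : nat), 1 <= k ->
  forall (T : {set {set vtx k}}) (s : seq {set {set vtx k}}),
    T = T_A k ->
    last T s = T_B k ->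
    all (spanning_tree (E_G k)) (T :: s) ->
    (forall i, i < size s -> adjacent_trees (a0 k) (nth T (T :: s) i) (nth T s i)) ->
    (c * ((4 * k + 1) ^ 2)%:R <= (size s + 1)%:R)%R.
Proof.
exists (25%:R^-1)%R; split; first by rewrite invr_gt0 ltr0n.
move=> k k1 T s eT eL hall hadj.
have hc := @chain k T s k1 hall hadj.
rewrite eL Psi_TB add0n eT in hc.
have hA := Psi_TA k.
have hn : (4 * k + 1) ^ 2 <= 25 * (size s + 1).
  move: hc hA; set P := Psi (T_A k); move=> hc hA.

  nia.
have hr : (((4 * k + 1) ^ 2)%:R <= (25 * (size s + 1))%:R :> rat)%R by rewrite ler_nat.
rewrite natrM in hr.
lra.
Qed.
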